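(* Let $\mathcal{A}$ be a complex Banach algebra with unity, $a,b\in\mathcal{A}$ and $k$ a positive integer. Suppose $ab\alpha_{1}\alpha_{2}\cdots\alpha_{k}=0$ for all $\alpha_{1},\dots,\alpha_{k}\in\{a,b\}$. Then $a,b\in\mathcal{A}^{qnil}$ if and only if $a+b\in\mathcal{A}^{qnil}$.
   Context: $\mathcal{A}^{qnil}$ denotes the set of quasinilpotent elements of $\mathcal{A}$, i.e. elements whose spectrum is $\{0\}$. *)

(* Defs.v *)
From HB Require Import structures.
From mathcomp Require Import all_boot all_order all_algebra.
From mathcomp Require Import all_classical all_reals all_analysis.
From mathcomp Require Import complex.
Set Implicit Arguments. Unset Strict Implicit. Unset Printing Implicit Defensive.
Import Order.TTheory GRing.Theory Num.Theory.
Import numFieldNormedType.Exports.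
Local Open Scope classical_set_scope.
Local Open Scope ring_scope.

(* Hierarchy-Builder cannot join the ring hierarchy with the normed-module
   hierarchy (Num.NumDomain already inherits both without a join), so a unital
   Banach algebra over K is presented as a complete normed K-module A (Banach
   space) together with a multiplication [mul] and a unit [one] satisfying the
   axioms of a unital associative K-algebra, a submultiplicative norm and
   ||1|| = 1. *)
Record banach_algebra (K : numFieldType) (A : completeNormedModType K)
    (mul : A -> A -> A) (one : A) : Prop := BanachAlgebra {
  ba_mulA : associative mul ;
  ba_mul1l : left_id one mul ;
  ba_mul1r : right_id one mul ;
  ba_mulDl : left_distributive mul +%R ;
  ba_mulDr : right_distributive mul +%R ;
  ba_mulZl : forall (l : K) (x y : A), mul (l *: x) y = l *: mul x y ;
  ba_mulZr : forall (l : K) (x y : A), mul x (l *: y) = l *: mul x y ;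
  ba_normM : forall x y : A, `|mul x y| <= `|x| * `|y| ;
  ba_norm1 : `|one| = 1
}.

Definition invertible (K : numFieldType) (A : completeNormedModType K)
    (mul : A -> A -> A) (one : A) (x : A) : Prop :=
  exists y : A, mul x y = one /\ mul y x = one.

Definition spectrum (K : numFieldType) (A : completeNormedModType K)
    (mul : A -> A -> A) (one : A) (a : A) : set K :=
  [set l : K | ~ invertible mul one (a - l *: one)].

Definition qnil (K : numFieldType) (A : completeNormedModType K)
    (mul : A -> A -> A) (one : A) (a : A) : Prop :=
  spectrum mul one a = [set 0].

(* Main.v *)
Require Import Defs.
From HB Require Import structures.
From mathcomp Require Import all_boot all_order all_algebra.
From mathcomp Require Import all_classical all_reals all_analysis.
From mathcomp Require Import complex.
From mathcomp Require Import cyclic separable cyclotomic.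
From mathcomp Require Import ring lra zify.
Import Order.TTheory GRing.Theory Num.Theory.
Import numFieldNormedType.Exports.
Set Implicit Arguments. Unset Strict Implicit. Unset Printing Implicit Defensive.
Local Open Scope ring_scope.
Local Open Scope complex_scope.
Section Basics.
Variable R : realType.

Definition cn (l : R[i]) : R := complex.Re `|l|.

Lemma normc_real (z : R[i]) : 0 <= z -> z = (complex.Re z)%:C.
Proof. by case: z => a b; rewrite lecE /= => /andP[/eqP -> _]. Qed.

Lemma cnE (l : R[i]) : `|l| = (cn l)%:C.
Proof. exact/normc_real/normr_ge0. Qed.

Lemma cn_ge0 l : 0 <= cn l.
Proof. by have := normr_ge0 l; rewrite cnE ler0c. Qed.

Lemma cnM l m : cn (l * m) = cn l * cn m.
Proof. by apply: complexI; rewrite -cnE normrM !cnE rmorphM. Qed.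

Lemma cnD l m : cn (l + m) <= cn l + cn m.
Proof. by have := ler_normD l m; rewrite !cnE -rmorphD lecR. Qed.

Lemma cnN l : cn (- l) = cn l.
Proof. by rewrite /cn normrN. Qed.

Lemma cnR (t : R) : cn t%:C = `|t|.
Proof.
rewrite /cn normc_def /=. by rewrite expr0n /= addr0 sqrtr_sqr.
Qed.

Lemma cn_eq0 l : (cn l == 0) = (l == 0).
Proof.
rewrite -(normr_eq0 l) cnE.
apply/idP/idP => /eqP h; apply/eqP; first by rewrite h.
by case: h.
Qed.

Lemma cn_Re l : `|complex.Re l| <= cn l.
Proof. by rewrite -lecR -cnE normc_ge_Re. Qed.

Lemma cn_Im l : `|complex.Im l| <= cn l.
Proof.
rewrite /cn normc_def /= -sqrtr_sqr; apply: ler_wsqrtr.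
by rewrite lerDr sqr_ge0.
Qed.

Lemma cn_le (l : R[i]) : cn l <= `|complex.Re l| + `|complex.Im l|.
Proof.
rewrite /cn normc_def /=.
set a := complex.Re l; set b := complex.Im l.
have ha := normr_ge0 a; have hb := normr_ge0 b.
rewrite -[X in _ <= X]ger0_norm ?addr_ge0 // -sqrtr_sqr; apply: ler_wsqrtr.
have e1 : `|a| ^+ 2 = a ^+ 2 := real_normK (num_real a).
have e2 : `|b| ^+ 2 = b ^+ 2 := real_normK (num_real b).
rewrite -e1 -e2 sqrrD mulr2n; have := mulr_ge0 ha hb; lra.
Qed.

End Basics.

Lemma prim_root_ex (R : realType) n : (n > 0)%N -> exists z : R[i], n.-primitive_root z.
Proof.
pose p : {poly R[i]} := 'X^n - 1; have [r Dp] := closed_field_poly_normal p.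
move=> n_gt0; rewrite (monicP _) ?monicXnsubC // scale1r in Dp.
have rn1: all n.-unity_root r by apply/allP=> z; rewrite -root_prod_XsubC -Dp.
have sz_r: (n < (size r).+1)%N.
  by rewrite -(size_prod_XsubC r id) -Dp size_XnsubC.
have [|z] := hasP (has_prim_root n_gt0 rn1 _ sz_r); last by exists z.
by rewrite -separable_prod_XsubC -Dp separable_Xn_sub_1 // pnatr_eq0 -lt0n.
Qed.

Lemma prim_sum (R : realType) n (z : R[i]) : n.-primitive_root z -> forall p, (0 < p < n)%N ->
  \sum_(k < n) (z ^+ p) ^+ k = 0.
Proof.
move=> zp p /andP[p0 pn].
have h1 : z ^+ p != 1.
  by rewrite -(prim_order_dvd zp) gtnNdvd.
have : (z ^+ p - 1) * \sum_(k < n) (z ^+ p) ^+ k = 0.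
  rewrite -subrX1 -exprM mulnC exprM (prim_expr_order zp) expr1n subrr //.
by move/eqP; rewrite mulf_eq0 subr_eq0 (negPf h1) /= => /eqP.
Qed.

Lemma sq_le_pow2 n : (4 <= n)%N -> (n ^ 2 <= 2 ^ n)%N.
Proof.
elim: n => [//|n IH] hn.
have [h4|h4] := leqP 4 n; last first.
  by have -> : n = 3 by lia.
rewrite [(2 ^ n.+1)%N]expnS; apply: (@leq_trans (2 * n ^ 2)%N); last by rewrite leq_mul2l IH.
nia.
Qed.

Lemma arith_contra (R : realFieldType) (M q n : R) : 0 < n -> M < n * (M - q) ->
  (M - q) * n ^+ 2 <= n * M -> False.
Proof.
move=> n0 h1 h2.
have h3 : 0 < n * (n * (M - q)) - n * M by rewrite -mulrBr mulr_gt0 // subr_gt0.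
have e : n * (n * (M - q)) = (M - q) * (n ^+ 2) by ring.
lra.
Qed.

Lemma lra_h1 (R : realFieldType) (a b c d : R) : a + b < c -> c <= d + a -> b < d.
Proof. lra. Qed.
Section Alg.
Variable R : realType.
Variable A : completeNormedModType (R[i]).
Variable mul : A -> A -> A.
Variable one : A.
Hypothesis hA : banach_algebra mul one.

Local Notation "x ** y" := (mul x y) (at level 40, left associativity).

Lemma mA x y z : x ** (y ** z) = x ** y ** z. Proof. exact: (ba_mulA hA). Qed.
Lemma m1l x : one ** x = x. Proof. exact: (ba_mul1l hA). Qed.
Lemma m1r x : x ** one = x. Proof. exact: (ba_mul1r hA). Qed.
Lemma mDl x y z : (x + y) ** z = x ** z + y ** z. Proof. exact: (ba_mulDl hA). Qed.
Lemma mDr x y z : x ** (y + z) = x ** y + x ** z. Proof. exact: (ba_mulDr hA). Qed.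
Lemma mZl (l : R[i]) x y : (l *: x) ** y = l *: (x ** y). Proof. exact: (ba_mulZl hA). Qed.
Lemma mZr (l : R[i]) x y : x ** (l *: y) = l *: (x ** y). Proof. exact: (ba_mulZr hA). Qed.
Lemma m0l x : 0 ** x = 0.
Proof. by have := mZl 0 0 x; rewrite !scale0r. Qed.
Lemma m0r x : x ** 0 = 0.
Proof. by have := mZr 0 x 0; rewrite !scale0r. Qed.
Lemma mNl x y : (- x) ** y = - (x ** y).
Proof. by rewrite -scaleN1r mZl scaleN1r. Qed.
Lemma mNr x y : x ** (- y) = - (x ** y).
Proof. by rewrite -scaleN1r mZr scaleN1r. Qed.
Lemma mBl x y z : (x - y) ** z = x ** z - y ** z.
Proof. by rewrite mDl mNl. Qed.
Lemma mBr x y z : x ** (y - z) = x ** y - x ** z.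
Proof. by rewrite mDr mNr. Qed.
Lemma msuml I (r : seq I) (P : pred I) (F : I -> A) y :
  (\sum_(i <- r | P i) F i) ** y = \sum_(i <- r | P i) (F i ** y).
Proof.
elim/big_rec2: _ => [|i s t _ <-]; first exact: m0l.
by rewrite mDl.
Qed.
Lemma msumr I (r : seq I) (P : pred I) (F : I -> A) y :
  y ** (\sum_(i <- r | P i) F i) = \sum_(i <- r | P i) (y ** F i).
Proof.
elim/big_rec2: _ => [|i s t _ <-]; first exact: m0r.
by rewrite mDr.
Qed.

Definition nr (x : A) : R := complex.Re `|x|.

Lemma nrE x : `|x| = (nr x)%:C.
Proof. exact/normc_real/normr_ge0. Qed.
Lemma nr_ge0 x : 0 <= nr x.
Proof. by have := normr_ge0 x; rewrite nrE ler0c. Qed.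
Lemma nrD x y : nr (x + y) <= nr x + nr y.
Proof. by have := ler_normD x y; rewrite !nrE -rmorphD lecR. Qed.
Lemma nrN x : nr (- x) = nr x.
Proof. by rewrite /nr normrN. Qed.
Lemma nrB x y : nr (x - y) = nr (y - x).
Proof. by rewrite -nrN opprB. Qed.
Lemma nrZ (l : R[i]) x : nr (l *: x) = cn l * nr x.
Proof. by apply: complexI; rewrite -nrE normrZ nrE cnE rmorphM. Qed.
Lemma nrM x y : nr (x ** y) <= nr x * nr y.
Proof. by have := ba_normM hA x y; rewrite !nrE -rmorphM lecR. Qed.
Lemma nr1 : nr one = 1.
Proof. by rewrite /nr (ba_norm1 hA). Qed.
Lemma nr0 : nr 0 = 0.
Proof. by rewrite /nr normr0. Qed.
Lemma nr_eq0 x : nr x = 0 -> x = 0.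
Proof. by move=> h; apply/eqP; rewrite -normr_eq0 nrE h. Qed.
Lemma nr_sum I (r : seq I) (P : pred I) (F : I -> A) :
  nr (\sum_(i <- r | P i) F i) <= \sum_(i <- r | P i) nr (F i).
Proof.
elim/big_rec2: _ => [|i s t _ h]; first by rewrite nr0.
by apply: le_trans (nrD _ _) _; rewrite lerD2l.
Qed.
Lemma one_neq0 : one != 0.
Proof. by apply/eqP => h; have := nr1; rewrite h nr0 => /eqP; rewrite eq_sym oner_eq0. Qed.
Definition pw x n := iter n (mul x) one.
Lemma pwS x n : pw x n.+1 = x ** pw x n. Proof. by []. Qed.
Lemma pw0 x : pw x 0 = one. Proof. by []. Qed.
Lemma pwSr x n : pw x n.+1 = pw x n ** x.
Proof.
elim: n => [|n IH]; first by rewrite /= m1r m1l.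
by rewrite [LHS]pwS {1}IH mA -pwS.
Qed.
Lemma nr_pw x n : nr (pw x n) <= nr x ^+ n.
Proof.
elim: n => [|n IH]; first by rewrite nr1 expr0.
rewrite pwS exprS; apply: le_trans (nrM _ _) _.
by apply: ler_wpM2l; [exact: nr_ge0|].
Qed.

Lemma inv_mul x y : invertible mul one x -> invertible mul one y ->
  invertible mul one (x ** y).
Proof.
move=> [x' [h1 h2]] [y' [h3 h4]]; exists (y' ** x'); split.
  by rewrite -mA (mA y) h3 m1l.
by rewrite -mA (mA x') h2 m1l.
Qed.

Lemma inv_scale (l : R[i]) x : l != 0 -> invertible mul one x ->
  invertible mul one (l *: x).
Proof.
move=> l0 [x' [h1 h2]]; exists (l^-1 *: x'); split.
  by rewrite mZl mZr scalerA divff // scale1r.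
by rewrite mZl mZr scalerA mulVf // scale1r.
Qed.

Lemma inv_nil T N : pw T N = 0 -> invertible mul one (one - T).
Proof.
move=> hN; exists (\sum_(0 <= p < N) pw T p); split.
  rewrite msumr.
  rewrite (eq_bigr (fun p => - (pw T p.+1 - pw T p))); last first.
    by move=> p _; rewrite mBl m1l pwS opprB.
  by rewrite sumrN telescope_sumr // hN pw0 sub0r opprK.
rewrite msuml.
rewrite (eq_bigr (fun p => - (pw T p.+1 - pw T p))); last first.
  by move=> p _; rewrite mBr m1r pwSr opprB.
by rewrite sumrN telescope_sumr // hN pw0 sub0r opprK.
Qed.

Lemma fix_right y r z L : y ** r = one -> L ** z = one ->
  nr L * nr (z - y) < 1 -> r ** y = one.
Proof.
move=> hr hL hlt; set f := one - r ** y.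
have yf : y ** f = 0 by rewrite /f mBr m1r mA hr m1l subrr.
have ff : f = L ** ((z - y) ** f).
  by rewrite mBl yf subr0 mA hL m1l.
have : nr f <= nr L * nr (z - y) * nr f.
  rewrite {1}ff; apply: le_trans (nrM _ _) _; rewrite -mulrA.
  by apply: ler_wpM2l; [exact: nr_ge0|exact: nrM].
move=> h.
have : nr f * (1 - nr L * nr (z - y)) <= 0.
  by rewrite mulrBr mulr1 subr_le0 mulrC.
rewrite pmulr_lle0 ?subr_gt0 // => hf.
have /nr_eq0 : nr f = 0 by apply/eqP; rewrite eq_le hf nr_ge0.
by move/eqP; rewrite subr_eq0 => /eqP <-.
Qed.

Lemma bound_inv y r z Rz : y ** r = one -> Rz ** z = one ->
  nr (y - z) * nr r <= 1/2 -> nr Rz <= 2 * nr r.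
Proof.
move=> hr hz hle.
have e : Rz = r + Rz ** (y - z) ** r.
  by rewrite -{1}(m1r Rz) -hr mA mBr mBl hz m1l addrC subrK.
have : nr Rz <= nr r + nr Rz * (nr (y - z) * nr r).
  rewrite {1}e; apply: le_trans (nrD _ _) _; rewrite lerD2l.
  apply: le_trans (nrM _ _) _; rewrite mulrA; apply: ler_wpM2r; first exact: nr_ge0.
  exact: nrM.
have := nr_ge0 Rz; have := nr_ge0 r; have := nr_ge0 (y - z).
move: hle; set u := nr (y - z) * nr r; move=> hle h1 h2 h3 h4.
have h5 : nr Rz * u <= nr Rz * (1/2) by apply: ler_wpM2l.
lra.
Qed.
Definition wd (l : seq A) := foldr mul one l.
Lemma wd_cat l1 l2 : wd (l1 ++ l2) = wd l1 ** wd l2.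
Proof. by elim: l1 => [|z l IH] /=; rewrite ?m1l // IH mA. Qed.
Lemma wd_rcons l z : wd (rcons l z) = wd l ** z.
Proof. by rewrite -cats1 wd_cat /= m1r. Qed.

Lemma expand (a b : A) (l : R[i]) :
  (a - l *: one) ** (b - l *: one) = a ** b - l *: (a + b - l *: one).
Proof.
rewrite mBl !mBr !mZl !mZr !m1l !m1r !scalerBr !scalerDr.
by rewrite !opprB opprD -addrA; congr (_ + _); rewrite addrCA.
Qed.

Section Words.
Variables (a b : A) (k : nat).
Definition letter (z : A) := (z == a) || (z == b).
Hypothesis habl : forall l, all letter l -> size l = k -> (a ** b) ** wd l = 0.

Definition Ij j x := forall l, all letter l -> (k <= size l + j)%N ->
  (a ** b) ** (wd l ** x) = 0.

Lemma I0 x : Ij 0 x.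
Proof.
move=> l hl; rewrite addn0 => hk.
rewrite -(cat_take_drop k l) wd_cat -(mA (wd (take k l))) mA habl ?m0l //.
  by move: hl; rewrite -{1}(cat_take_drop k l) all_cat => /andP[].
by rewrite size_takel.
Qed.

Lemma Imon j j' x : (j <= j')%N -> Ij j' x -> Ij j x.
Proof.
move=> hj h l hl hk; apply: h => //; by rewrite (leq_trans hk) // leq_add2l.
Qed.

Lemma Iadd j x y : Ij j x -> Ij j y -> Ij j (x + y).
Proof. by move=> hx hy l hl hk; rewrite mDr mDr hx ?hy ?addr0. Qed.
Lemma Iopp j x : Ij j x -> Ij j (- x).
Proof. by move=> hx l hl hk; rewrite mNr mNr hx ?oppr0. Qed.
Lemma Isub j x y : Ij j x -> Ij j y -> Ij j (x - y).
Proof. by move=> hx hy; apply: Iadd => //; exact: Iopp. Qed.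
Lemma Iscale j (c : R[i]) x : Ij j x -> Ij j (c *: x).
Proof. by move=> hx l hl hk; rewrite mZr mZr hx ?scaler0. Qed.

Lemma Iletter j z x : letter z -> Ij j x -> Ij j.+1 (z ** x).
Proof.
move=> hz hx l hl hk; rewrite (mA (wd l)) -wd_rcons; apply: hx.
  by rewrite all_rcons hz hl.
by rewrite size_rcons addSn -addnS.
Qed.

Lemma Ia j x : Ij j x -> Ij j.+1 (a ** x).
Proof. by apply: Iletter; rewrite /letter eqxx. Qed.
Lemma Ib j x : Ij j x -> Ij j.+1 (b ** x).
Proof. by apply: Iletter; rewrite /letter eqxx orbT. Qed.
Lemma Is j x : Ij j x -> Ij j.+1 ((a + b) ** x).
Proof. by move=> h; rewrite mDl; apply: Iadd; [exact: Ia|exact: Ib]. Qed.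

Lemma Ik x : Ij k x -> (a ** b) ** x = 0.
Proof. by move=> h; have := h [::] isT; rewrite /= m1l add0n; apply. Qed.

Lemma Iinv (c g : A) (l : R[i]) : l != 0 ->
  (forall j x, Ij j x -> Ij j.+1 (c ** x)) ->
  (c - l *: one) ** g = one ->
  forall j x, Ij j x -> Ij j (g ** x).
Proof.
move=> l0 hc hg j x hx.
have e : g ** x = l^-1 *: (c ** (g ** x) - x).
  have e1 : l *: g = c ** g - one.
    by rewrite -hg mBl mZl m1l opprB addrC subrK.
  have e2 : g = l^-1 *: (c ** g - one) by rewrite -e1 scalerA mulVf // scale1r.
  by rewrite {1}e2 mZl mBl m1l mA.
have : forall m, (m <= j)%N -> Ij m (g ** x).
  elim=> [|m IH] hm; first exact: I0.
  rewrite e; apply: Iscale; apply: Isub.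
    by apply: hc; apply: IH; exact: ltnW.
  exact: Imon hm hx.
by apply.
Qed.

Lemma Inil (P : A) : (forall j x, Ij j x -> Ij j (P ** x)) ->
  pw ((a ** b) ** P) k.+1 = 0.
Proof.
move=> hP.
set T := (a ** b) ** P.
have h : forall m, Ij m.*2 (pw T m).
  elim=> [|m IH]; first exact: I0.
  rewrite pwS {1}/T -!mA doubleS; apply: Ia; apply: Ib; exact: hP.
rewrite pwS {1}/T -mA; apply: Ik; apply: hP; apply: Imon (h k).
by rewrite -addnn leq_addr.
Qed.

Lemma fwd_step (l : R[i]) : l != 0 ->
  invertible mul one (a - l *: one) -> invertible mul one (b - l *: one) ->
  invertible mul one (a + b - l *: one).
Proof.
move=> l0 ha hb.
have hM := inv_mul ha hb.
case: ha => al [ha1 ha2]; case: hb => be [hb1 hb2].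
set Mx := (a - l *: one) ** (b - l *: one).
set Mi := be ** al.
have hMi : Mi ** Mx = one by rewrite /Mi /Mx -mA (mA al) ha2 m1l hb2.
have hP : forall j x, Ij j x -> Ij j (Mi ** x).
  move=> j x hx; rewrite /Mi -mA.
  apply: (Iinv l0 (@Ib) hb1); apply: (Iinv l0 (@Ia) ha1) hx.
have e : a + b - l *: one = (- l^-1) *: ((one - (a ** b) ** Mi) ** Mx).
  rewrite mBl m1l -mA hMi m1r /Mx expand [in RHS]addrAC [in RHS]subrr add0r.
  by rewrite scalerN scaleNr opprK scalerA mulVf // scale1r.
rewrite e; apply: inv_scale; first by rewrite oppr_eq0 invr_eq0.
apply: inv_mul => //; exact: inv_nil (Inil hP).
Qed.

Lemma conv_step (l : R[i]) : l != 0 ->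
  invertible mul one (a + b - l *: one) ->
  invertible mul one ((a - l *: one) ** (b - l *: one)).
Proof.
move=> l0 [g [hg1 hg2]].
have hP : forall j x, Ij j x -> Ij j ((l^-1 *: g) ** x).
  move=> j x hx; rewrite mZl; apply: Iscale; exact: (Iinv l0 (@Is) hg1).
have e : (a - l *: one) ** (b - l *: one) =
    (- l) *: ((one - (a ** b) ** (l^-1 *: g)) ** (a + b - l *: one)).
  rewrite expand [in RHS]mBl m1l -mA mZl hg2 mZr m1r.
  rewrite [in RHS]scalerBr [in RHS]scalerA mulNr mulrV // scaleN1r opprK scaleNr.
  by rewrite addrC.
rewrite e; apply: inv_scale; first by rewrite oppr_eq0.
apply: inv_mul; last by exists g.
exact: inv_nil (Inil hP).
Qed.

End Words.
Lemma large_right (x : A) (l : R[i]) r : (x - l *: one) ** r = one ->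
  nr x < cn l -> r ** (x - l *: one) = one.
Proof.
move=> hr hl; set f := one - r ** (x - l *: one).
have yf : (x - l *: one) ** f = 0 by rewrite /f mBr m1r mA hr m1l subrr.
have xf : x ** f = l *: f by move: yf; rewrite mBl mZl m1l => /eqP; rewrite subr_eq0 => /eqP.
have h : cn l * nr f <= nr x * nr f by rewrite -nrZ -xf; exact: nrM.
have : nr f * (cn l - nr x) <= 0 by rewrite mulrBr subr_le0 mulrC [_ * nr x]mulrC.
rewrite pmulr_lle0 ?subr_gt0 // => hf.
have /nr_eq0 : nr f = 0 by apply/eqP; rewrite eq_le hf nr_ge0.
by move/eqP; rewrite subr_eq0 => /eqP <-.
Qed.

Lemma nr_diff (x : A) (m1 m2 : R[i]) :
  nr ((x - m1 *: one) - (x - m2 *: one)) = cn (m2 - m1).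
Proof.
by rewrite opprB addrC addrA subrK -scalerBl nrZ nr1 mulr1.
Qed.

Lemma cn_tl (t s : R) (l : R[i]) : cn (t%:C * l - s%:C * l) = `|t - s| * cn l.
Proof. by rewrite -mulrBl -rmorphB cnM cnR. Qed.

Lemma right_to_inv (x : A) :
  (forall l : R[i], l != 0 -> exists r, (x - l *: one) ** r = one) ->
  forall l : R[i], l != 0 -> invertible mul one (x - l *: one).
Proof.
move=> hR l l0.
have [//|ninv] := pselect (invertible mul one (x - l *: one)).
exfalso.
have cl0 : 0 < cn l by rewrite lt_def cn_eq0 l0 cn_ge0.
have tl0 : forall t : R, 1 <= t -> t%:C * l != 0.
  move=> t t1; rewrite mulf_neq0 //; apply/eqP => -[] h; move: t1; rewrite h; lra.
pose E := [set t : R | 1 <= t /\ ~ invertible mul one (x - (t%:C * l) *: one)]%classic.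
have ub : forall t, E t -> t <= nr x / cn l.
  move=> t [t1 tn]; rewrite leNgt; apply/negP => ht; apply: tn.
  have [r hr] := hR _ (tl0 _ t1); exists r; split => //.
  apply: large_right hr _; rewrite cnM cnR ger0_norm; last lra.
  by rewrite ltr_pdivrMr // in ht.
have E1 : E 1 by split => //; rewrite mul1r.
have hs : has_sup E by split; [exists 1 | exists (nr x / cn l) => t /ub].
set s := sup E.
have s1 : 1 <= s by exact: sup_upper_bound hs _ E1.
have [[Rz [hz1 hz2]] | nz] := pselect (invertible mul one (x - (s%:C * l) *: one)).
  pose d := 1 / (2 * (nr Rz + 1) * cn l).
  have nRz := nr_ge0 Rz.
  have d0 : 0 < d by rewrite divr_gt0 // !mulr_gt0 //; lra.
  have [t Et ht] := sup_adherent d0 hs; rewrite -/s in ht.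
  have ts : t <= s by exact: sup_upper_bound hs _ Et.
  case: (Et) => t1 tn; apply: tn.
  have [r hr] := hR _ (tl0 _ t1); exists r; split => //.
  apply: (fix_right hr hz2).
  rewrite nr_diff cn_tl.
  have hX : `|t - s| * cn l < d * cn l.
    by rewrite ltr_pM2r // ler0_norm; [rewrite opprB; lra | lra].
  have hD : 2 * (nr Rz * (d * cn l)) + 2 * (d * cn l) = 1.
    rewrite /d; field; apply/andP; split; rewrite gt_eqF //; lra.
  have hN : nr Rz * (`|t - s| * cn l) <= nr Rz * (d * cn l).
    by apply: ler_wpM2l => //; exact: ltW.
  have : 0 < d * cn l by rewrite mulr_gt0.
  lra.
have [rho hrho] := hR _ (tl0 _ s1).
pose d := 1 / (4 * (nr rho + 1) * cn l).
have nrho := nr_ge0 rho.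
have d0 : 0 < d by rewrite divr_gt0 // !mulr_gt0 //; lra.
have Et : ~ E (s + d).
  move=> Et; have := sup_upper_bound hs Et; rewrite -/s; lra.
have [[Rz [hz1 hz2]] | ] := pselect (invertible mul one (x - ((s + d)%:C * l) *: one));
  last by move=> h; apply: Et; split => //; lra.
have hD : 4 * (nr rho * (d * cn l)) + 4 * (d * cn l) = 1.
  rewrite /d; field; apply/andP; split; rewrite gt_eqF //; lra.
have dcl : 0 < d * cn l by rewrite mulr_gt0.
have nd : nr ((x - (s%:C * l) *: one) - (x - ((s + d)%:C * l) *: one)) = d * cn l.
  by rewrite nr_diff cn_tl (addrC s d) addrK ger0_norm // ltW.
have bnd : nr Rz <= 2 * nr rho.
  apply: (bound_inv hrho hz2); rewrite nd; nra.
apply: nz; exists rho; split => //.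
apply: (fix_right hrho hz2).
rewrite nrB nd; have := nr_ge0 Rz => hR0.
have : nr Rz * (d * cn l) <= 2 * nr rho * (d * cn l).
  by apply: ler_wpM2r => //; rewrite mulr_ge0 // ltW.
nra.
Qed.
Lemma ba_opp : banach_algebra (fun x y => y ** x) one.
Proof.
split.
- by move=> x y z /=; rewrite mA.
- by move=> x /=; rewrite m1r.
- by move=> x /=; rewrite m1l.
- by move=> x y z /=; rewrite mDr.
- by move=> x y z /=; rewrite mDl.
- by move=> l x y /=; rewrite mZr.
- by move=> l x y /=; rewrite mZl.
- by move=> x y /=; rewrite mulrC; exact: (ba_normM hA).
- exact: (ba_norm1 hA).
Qed.

Lemma inv_opp x : invertible (fun x y => y ** x) one x -> invertible mul one x.
Proof. by case=> y [h1 h2]; exists y. Qed.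
Lemma nr_dist (u v : A) : `|nr u - nr v| <= nr (u - v).
Proof.
have h1 : nr u <= nr v + nr (u - v) by rewrite -{1}(subrK v u) addrC; exact: nrD.
have h2 : nr v <= nr u + nr (u - v) by rewrite nrB -{1}(subrK u v) addrC; exact: nrD.
by rewrite ler_norml; apply/andP; split; lra.
Qed.

Lemma gelfand (x : A) : ~ (forall l : R[i], invertible mul one (x - l *: one)).
Proof.
move=> hinv.
pose Rv l := sval (cid (hinv l)).
have Rr l : (x - l *: one) ** Rv l = one by have [] := svalP (cid (hinv l)).
have Rl l : Rv l ** (x - l *: one) = one by have [] := svalP (cid (hinv l)).
pose phi l := nr (Rv l).
have phi_gt0 l : 0 < phi l.
  rewrite lt_def nr_ge0 andbT; apply/eqP => /nr_eq0 h.
  by move: (Rl l); rewrite h m0l => /eqP; rewrite eq_sym (negPf one_neq0).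
have res l m : Rv l = Rv m + (l - m) *: (Rv l ** Rv m).
  have e : Rv l ** (x - m *: one) = one + (l - m) *: Rv l.
    have -> : x - m *: one = (x - l *: one) + (l - m) *: one.
      by rewrite scalerBl addrA subrK.
    by rewrite mDr Rl mZr m1r.
  by rewrite -{1}(m1r (Rv l)) -(Rr m) mA e mDl m1l mZl.
have B1 l m : phi l <= phi m + cn (l - m) * phi l * phi m.
  rewrite /phi {1}(res l m); apply: le_trans (nrD _ _) _; rewrite lerD2l nrZ -mulrA.
  by apply: ler_wpM2l; [exact: cn_ge0 | exact: nrM].
have B3 l m : `|phi l - phi m| <= cn (l - m) * phi l * phi m.
  apply: le_trans (nr_dist _ _) _; rewrite {1}(res l m) addrC addKr nrZ -mulrA.
  by apply: ler_wpM2l; [exact: cn_ge0 | exact: nrM].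
have B2 l m : cn (l - m) * phi m <= 1/2 -> phi l <= 2 * phi m.
  move=> h; have := B1 l m; have := phi_gt0 l; have := phi_gt0 m.
  have := cn_ge0 (l - m); nra.
have decay l : phi l * (cn l - nr x) <= 1.
  have e : l *: Rv l = Rv l ** x - one by rewrite -(Rl l) mBr mZr m1r opprB addrC subrK.
  have : cn l * phi l <= phi l * nr x + 1.
    rewrite -nrZ e; apply: le_trans (nrD _ _) _; rewrite nrN nr1 lerD2r; exact: nrM.
  lra.
pose g (p : R * R) := phi (p.1 +i* p.2).
have gcont : continuous g.
  move=> p; apply/cvgrPdist_lt => e e0.
  set m := p.1 +i* p.2.
  have pm := phi_gt0 m.
  pose d := Num.min (1 / (4 * phi m)) (e / (8 * phi m ^+ 2)).
  have d0 : 0 < d by rewrite lt_min !divr_gt0 // ?mulr_gt0 ?exprn_gt0 //.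
  have dle1 : d * (4 * phi m) <= 1.
    by rewrite -ler_pdivlMr ?mulr_gt0 // ?ge_min ?lexx // mul1r.
  have dle2 : d * (8 * phi m ^+ 2) <= e.
    by rewrite -ler_pdivlMr ?mulr_gt0 ?exprn_gt0 // ge_min lexx orbT.
  apply: filterS (nbhsx_ballx p d d0) => q [h1 h2].
  rewrite -ball_normE /= in h1 h2.
  set l := q.1 +i* q.2.
  have hc : cn (l - m) <= 2 * d.
    apply: le_trans (cn_le _) _; rewrite /= (distrC q.1) (distrC q.2); lra.
  have hl : phi l <= 2 * phi m.
    apply: B2; have := cn_ge0 (l - m); nra.
  rewrite /g -/m -/l distrC; apply: le_lt_trans (B3 l m) _.
  have h3 : cn (l - m) * phi l <= (2 * d) * (2 * phi m).
    by apply: ler_pM => //; [exact: cn_ge0 | exact: nr_ge0].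
  have h4 : cn (l - m) * phi l * phi m <= (2 * d) * (2 * phi m) * phi m.
    by apply: ler_wpM2r => //; exact: ltW.
  apply: le_lt_trans h4 _; rewrite expr2 in dle2; nra.
have p0 := phi_gt0 0.
pose K := nr x + 1 / phi 0 + 1.
have K0 : 0 < K.
  have := nr_ge0 x; have : 0 < 1 / phi 0 by rewrite divr_gt0.
  rewrite /K; lra.
pose S := (`[-K, K] `*` `[-K, K])%classic.
have cS : compact S by apply: compact_setX; exact: segment_compact.
have inS (u v : R) : `|u| <= K -> `|v| <= K -> (u, v) \in S.
  move=> hu hv; rewrite inE /S /=; split; rewrite /= in_itv /= -ler_norml //.
have S0 : (S !=set0)%classic.
  by exists (0, 0); apply/set_mem/inS; rewrite normr0 ltW.
have [c cinS cmax] := compact_EVT_max S0 cS (continuous_subspaceT gcont).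
set cc := c.1 +i* c.2.
set M := phi cc.
have phi0M : phi 0 <= M.
  have := cmax (0, 0) (inS _ _ _ _); rewrite /g /=; apply.
    by rewrite normr0 ltW.
  by rewrite normr0 ltW.
have outside l : K < cn l -> phi l < phi 0.
  move=> hK; have d1 := decay l; have pl := phi_gt0 l.
  have e1 : phi 0 * (1 / phi 0) = 1 by rewrite mul1r divff // gt_eqF.
  have i0 : 0 < 1 / phi 0 by rewrite divr_gt0.
  rewrite /K in hK; rewrite ltNge; apply/negP => h.
  have h2 : phi 0 * (cn l - nr x) <= phi l * (cn l - nr x).
    by apply: ler_wpM2r => //; lra.
  nra.
have gmax l : phi l <= M.
  case: (boolP ((`|complex.Re l| <= K) && (`|complex.Im l| <= K))).
    case/andP=> h1 h2; have := cmax _ (inS _ _ h1 h2); rewrite /g /=.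
    by case: (l).
  rewrite negb_and -!ltNge => h.
  apply: le_trans (ltW (outside l _)) phi0M.
  by case/orP: h => h; [apply: lt_le_trans (cn_Re l) | apply: lt_le_trans (cn_Im l)].
have M0 : 0 < M by apply: lt_le_trans phi0M.
pose r := 1 / (2 * M).
have r0 : 0 < r by rewrite divr_gt0 // mulr_gt0.
have rM : r * M = 1 / 2 by rewrite /r; field; rewrite gt_eqF.
have key : forall c0, phi c0 = M -> forall n, (0 < n)%N ->
    (M - phi (c0 + r%:C)) * 2 ^+ n <= n%:R * M.
  move=> c0 hc0 [//|n'] _; set n := n'.+1.
  have [om hom] := @prim_root_ex R n isT.
  pose nu (k : nat) := om ^+ k * r%:C.
  pose w := Rv c0.
  pose Z k := Rv (c0 + nu k).
  have resZ k : Z k = w + nu k *: (Z k ** w).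
    by rewrite /Z {1}(res (c0 + nu k) c0) addrAC subrr add0r.
  have iter k N : Z k = \sum_(p < N) (nu k ^+ p) *: pw w p.+1 + (nu k ^+ N) *: (Z k ** pw w N).
    elim: N => [|N IH]; first by rewrite big_ord0 add0r expr0 scale1r m1r.
    have eZ : Z k ** pw w N = pw w N.+1 + nu k *: (Z k ** pw w N.+1).
      by rewrite {1}(resZ k) mDl mZl -mA -!pwS.
    rewrite {1}IH eZ scalerDr scalerA -exprSr big_ord_recr /= addrA.
    done.
  have hsum : \sum_(k < n) Z k =
      n%:R *: w + (r%:C ^+ n) *: ((\sum_(k < n) Z k) ** pw w n).
    rewrite {1}(eq_bigr _ (fun (k : 'I_n) _ => iter k n)) big_split /=.
    congr (_ + _).
      rewrite exchange_big big_ord_recl /=.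
      rewrite [X in _ + X]big1 ?addr0; last first.
        move=> p _; rewrite -scaler_suml.
        rewrite (eq_bigr (fun k : 'I_n => r%:C ^+ (bump 0 p) * (om ^+ (bump 0 p)) ^+ k)); last first.
          by move=> k _; rewrite /nu exprMn -!exprM mulnC mulrC.
        rewrite -mulr_sumr prim_sum ?mulr0 ?scale0r //.
        by rewrite /bump /= add1n ltnS ltn_ord.
      rewrite (eq_bigr (fun _ => w)); last by move=> k _; rewrite expr0 scale1r /= m1r.
      by rewrite sumr_const card_ord scaler_nat.
    rewrite msuml scaler_sumr; apply: eq_bigr => k _.
    by rewrite /nu exprMn -exprM mulnC exprM (prim_expr_order hom) expr1n mul1r.
  set T := nr (\sum_(k < n) Z k).
  have hq := gmax (c0 + r%:C).
  have hT : T <= phi (c0 + r%:C) + n'%:R * M.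
    apply: le_trans (nr_sum _ _ _) _; rewrite big_ord_recl /=.
    rewrite /Z /nu expr0 mul1r; apply: lerD => //.
    apply: le_trans (ler_sum _ (fun (i : 'I_n') _ => gmax _)) _.
    by rewrite sumr_const card_ord mulr_natl.
  have cnn : cn (n%:R : R[i]) = n%:R.
    by rewrite -(rmorph_nat (real_complex R)) cnR ger0_norm.
  have hn : n%:R * M <= T + r ^+ n * M ^+ n * T.
    have e : n%:R *: w = \sum_(k < n) Z k - r%:C ^+ n *: ((\sum_(k < n) Z k) ** pw w n).
      by rewrite {1}hsum addrK.
    have := nrZ (n%:R : R[i]) w; rewrite cnn -/(phi c0) hc0 => <-.
    rewrite e; apply: le_trans (nrD _ _) _; rewrite nrN lerD2l nrZ -rmorphXn cnR.
    have r0' : 0 <= r := ltW r0.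
    rewrite ger0_norm ?exprn_ge0 // -mulrA; apply: ler_wpM2l; first exact: exprn_ge0.
    apply: le_trans (nrM _ _) _; rewrite mulrC; apply: ler_wpM2r; first exact: nr_ge0.
    by apply: le_trans (nr_pw _ _) _; rewrite -/(phi c0) hc0.
  have hh : r ^+ n * M ^+ n * 2 ^+ n = 1.
    by rewrite -exprMn rM -exprMn div1r mulVf ?expr1n // pnatr_eq0.
  have h0 : 0 <= r ^+ n * M ^+ n by rewrite mulr_ge0 // exprn_ge0 // ltW.
  have T0 : 0 <= T := nr_ge0 _.
  have e1 : r ^+ n * M ^+ n * T <= r ^+ n * M ^+ n * (n%:R * M).
    apply: ler_wpM2l => //; apply: le_trans hT _.
    have : n%:R * M = n'%:R * M + M by rewrite /n -addn1 natrD mulrDl mul1r.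
    lra.
  have e2 : M - phi (c0 + r%:C) <= r ^+ n * M ^+ n * (n%:R * M).
    have : n%:R * M = n'%:R * M + M by rewrite /n -addn1 natrD mulrDl mul1r.
    lra.
  apply: le_trans (ler_wpM2r _ e2) _; first by rewrite exprn_ge0.
  by rewrite mulrAC hh mul1r.
have step : forall c0, phi c0 = M -> phi (c0 + r%:C) = M.
  move=> c0 hc0; apply/eqP; rewrite eq_le gmax /= leNgt; apply/negP => hq.
  set q := phi (c0 + r%:C) in hq.
  have dq : 0 < M - q by rewrite subr_gt0.
  pose n := maxn 4 (Num.Def.trunc (M / (M - q))).+1.
  have n4 : (4 <= n)%N by rewrite leq_maxl.
  have hk := key c0 hc0 n (@leq_trans 4 1 n isT n4).
  have hsq : (n%:R : R) ^+ 2 <= 2 ^+ n.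
    by rewrite -natrX -(natrX R 2 n) ler_nat sq_le_pow2.
  have hM : M / (M - q) < n%:R.
    apply: lt_le_trans (truncnS_gt _) _; rewrite ler_nat leq_maxr //.
  have h1 : (M - q) * (n%:R ^+ 2) <= n%:R * M.
    by apply: le_trans hk; apply: ler_wpM2l => //; exact: ltW.
  rewrite ltr_pdivrMr // in hM.
  have n0 : (0 : R) < n%:R by rewrite ltr0n; apply: leq_trans n4.
  exact: (arith_contra n0 hM h1).
have chain : forall j : nat, phi (cc + (j%:R * r)%:C) = M.
  elim=> [|j IH]; first by rewrite mul0r rmorph0 addr0.
  have -> : cc + (j.+1%:R * r)%:C = (cc + (j%:R * r)%:C) + r%:C.
    by rewrite -natr1 mulrDl mul1r rmorphD addrA.
  exact: step.
pose j := (Num.Def.trunc ((cn cc + K) / r)).+1.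
have hj : cn cc + K < j%:R * r.
  by rewrite -ltr_pdivrMr //; exact: truncnS_gt.
have : K < cn (cc + (j%:R * r)%:C).
  have h1 : cn (j%:R * r)%:C <= cn (cc + (j%:R * r)%:C) + cn cc.
    by have := cnD (cc + (j%:R * r)%:C) (- cc); rewrite addrAC subrr add0r cnN.
  rewrite cnR ger0_norm in h1; last by rewrite mulr_ge0 // ltW.
  exact: lra_h1 hj h1.
move/outside; rewrite chain => h; by have := lt_le_trans h phi0M; rewrite ltxx.
Qed.
End Alg.

Lemma big_wd (T : Type) (op : T -> T -> T) (idx x0 : T) (l : seq T) :
  \big[op/idx]_(i < size l) nth x0 l i = foldr op idx l.
Proof.
rewrite -(big_mkord xpredT (fun i => nth x0 l i)) -(big_nth x0 xpredT id).
by elim: l => [|z l IH]; rewrite ?big_nil ?big_cons ?IH.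
Qed.

Theorem lemma3p1 (R : realType) (A : completeNormedModType (R[i]))
  (mul : A -> A -> A) (one : A) (hA : banach_algebra mul one)
  (a b : A) (k : nat) (hk : (0 < k)%N)
  (hab : forall al : 'I_k -> A, (forall i, al i = a \/ al i = b) ->
           mul (mul a b) (\big[mul/one]_(i < k) al i) = 0) :
  (qnil mul one a /\ qnil mul one b) <-> qnil mul one (a + b).
Proof.
have habl : forall l, all (letter a b) l -> size l = k ->
    mul (mul a b) (wd mul one l) = 0.
  move=> l hl hs.
  have := hab (fun i => nth a l i).
  rewrite -hs big_wd; apply => i.
  have := all_nthP a hl i (ltn_ord i).
  by case/orP => /eqP ->; [left | right].
have spec_inv (x : A) (m : R[i]) : qnil mul one x -> m != 0 ->
    invertible mul one (x - m *: one).
  move=> qx m0; have [//|h] := pselect (invertible mul one (x - m *: one)).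
  have : spectrum mul one x m by [].
  by rewrite qx => /= /eqP; rewrite (negPf m0).
split.
  move=> [qa qb].
  have hsm m : m != 0 -> invertible mul one (a + b - m *: one).
    by move=> m0; apply: (fwd_step hA habl m0); apply: spec_inv.
  apply/seteqP; split => m /=.
    move=> nm; apply/eqP; apply/negP => /negP m0; exact: nm (hsm m m0).
  move=> -> hinv; apply: (gelfand hA (x := a + b)) => m'.
  have [->|m0] := eqVneq m' 0; last exact: hsm.
  by rewrite scale0r subr0; move: hinv; rewrite scale0r subr0.
move=> qs.
have hM m : m != 0 -> invertible mul one (mul (a - m *: one) (b - m *: one)).
  by move=> m0; apply: (conv_step hA habl m0); apply: spec_inv.
have ia : forall m : R[i], m != 0 -> invertible mul one (a - m *: one).
  apply: (right_to_inv hA) => m m0.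
  have [Mi [h1 h2]] := hM m m0.
  by exists (mul (b - m *: one) Mi); rewrite (mA hA).
have ib : forall m : R[i], m != 0 -> invertible mul one (b - m *: one).
  move=> m m0; apply: (@inv_opp R A mul one).
  apply: (right_to_inv (ba_opp hA)) => // m' m0' /=.
  have [Mi [h1 h2]] := hM m' m0'.
  by exists (mul Mi (a - m' *: one)); rewrite -(mA hA).
have qn (x : A) : (forall m : R[i], m != 0 -> invertible mul one (x - m *: one)) ->
    qnil mul one x.
  move=> hx; apply/seteqP; split => m /=.
    move=> nm; apply/eqP; apply/negP => /negP m0; exact: nm (hx m m0).
  move=> -> hinv; apply: (gelfand hA (x := x)) => m'.
  have [->|m0] := eqVneq m' 0; last exact: hx.
  by rewrite scale0r subr0; move: hinv; rewrite scale0r subr0.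
by split; apply: qn.
Qed.
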